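(* Let $P = \langle X \mid R\rangle$ be a countably generated recursive presentation and $A$ a recursively enumerable set of integers. For each $i \in \mathbb{N}$ the set $T^{A}_{i} := \{ w \in X^{*} \mid \overline{w} \in \mathrm{Tor}^{A}_{i}(\overline{P})\}$ is recursively enumerable, uniformly in $i$ and in the presentation $P$. Moreover, the union $T^{A}_{\omega} := \bigcup_{i} T^{A}_{i}$ is recursively enumerable and equals $\{ w \in X^{*} \mid \overline{w} \in \mathrm{Tor}^{A}_{\omega}(\overline{P})\}$.
   Context: A countably generated recursive presentation $\langle X \mid R\rangle$ is a group presentation where $X$ is a recursively enumerated set of generators and $R$ is a recursive enumeration of relators. $\overline{P}$ denotes the group presented by $P$, $X^{*}$ the set of finite words on $X \cup X^{-1}$, and $\overline{w}$ the element represented by $w$. For a group $G$ and set of integers $A$: $\mathrm{Tor}^{A}(G) := \{ g \in G \mid \exists n \in A \text{ with } g^{n} = e\}$; $\mathrm{Tor}^{A}_{0}(G) := \{e\}$, $\mathrm{Tor}^{A}_{n+1}(G) := \langle\langle \{ g \in G \mid g\,\mathrm{Tor}^{A}_{n}(G) \in \mathrm{Tor}^{A}(G/\mathrm{Tor}^{A}_{n}(G))\} \rangle\rangle^{G}$ (normal closure in $G$), and $\mathrm{Tor}^{A}_{\omega}(G) := \bigcup_{n \in \mathbb{N}} \mathrm{Tor}^{A}_{n}(G)$. *)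

(* Defs.v *)
From mathcomp Require Import all_boot ssralg ssrnum ssrint.
Set Implicit Arguments. Unset Strict Implicit. Unset Printing Implicit Defensive.

Inductive pr : Type :=
| PZero
| PSucc
| PProj (i : nat)
| POracle (j : nat)
| PComp (f : pr) (gs : seq pr)
| PRec (f g : pr).

Fixpoint pr_eval (os : seq (nat -> nat)) (t : pr) (xs : seq nat) {struct t} : nat :=
  match t with
  | PZero => 0
  | PSucc => (head 0 xs).+1
  | PProj i => nth 0 xs i
  | POracle j => nth (fun _ => 0) os j (head 0 xs)
  | PComp f gs => pr_eval os f (map (fun g => pr_eval os g xs) gs)
  | PRec f g =>
      let ys := behead xs in
      (fix loop (k : nat) : nat :=
         match k with
         | 0 => pr_eval os f ys
         | k'.+1 => pr_eval os g [:: k', loop k' & ys]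
         end) (head 0 xs)
  end.

Definition computable_fun (f : nat -> nat) : Prop :=
  exists t : pr, forall n, pr_eval [::] t [:: n] = f n.

Definition re_int_set (A : int -> Prop) : Prop :=
  exists t : pr, forall z : int, A z <-> exists k, pr_eval [::] t [:: k; pickle z] != 0.

Section GroupDefs.
Variables (T : Type) (eqv : T -> T -> Prop) (mul : T -> T -> T) (inv : T -> T) (one : T).

Definition gpow (g : T) (n : int) : T :=
  match n with
  | Posz k => iter k (mul g) one
  | Negz k => inv (iter k.+1 (mul g) one)
  end.

Definition normal_subgroup (N : T -> Prop) : Prop :=
  [/\ (forall g h, eqv g h -> N g -> N h),
      N one,
      (forall g h, N g -> N h -> N (mul g h)),
      (forall g, N g -> N (inv g)) &
      (forall g h, N g -> N (mul (mul (inv h) g) h))].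

Definition normal_closure (S : T -> Prop) (g : T) : Prop :=
  forall N, normal_subgroup N -> (forall x, S x -> N x) -> N g.

Definition TorA (A : int -> Prop) (g : T) : Prop :=
  exists n, A n /\ eqv (gpow g n) one.

(* Tor^A_n(G); g Tor_n is in Tor^A(G/Tor_n) iff some a in A has g^a in Tor_n *)
Fixpoint TorAn (A : int -> Prop) (n : nat) : T -> Prop :=
  match n with
  | 0 => fun g => eqv g one
  | n'.+1 => normal_closure (fun g => exists a, A a /\ TorAn A n' (gpow g a))
  end.

Definition TorAomega (A : int -> Prop) (g : T) : Prop := exists n, TorAn A n g.

End GroupDefs.

(* a letter (x, true) is the generator x, (x, false) is x^-1 *)
Definition letter := (nat * bool)%type.
Definition word := seq letter.

Definition winv (w : word) : word := rev (map (fun l => (l.1, ~~ l.2)) w).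

(* A countably generated presentation, given by enumerations:
   X = {x | exists k, fX k = x.+1},  R = {r | exists k, fR k = (pickle r).+1}.
   (value 0 = "nothing enumerated at this step", so X, R may be empty) *)
Definition gens (fX : nat -> nat) (x : nat) : Prop := exists k, fX k = x.+1.
Definition rels (fR : nat -> nat) (r : word) : Prop := exists k, fR k = (pickle r).+1.

Definition word_over (fX : nat -> nat) (w : word) : Prop :=
  forall l, l \in w -> gens fX l.1.

Definition wf_presentation (fX fR : nat -> nat) : Prop :=
  forall r, rels fR r -> word_over fX r.

Inductive pres_eq (fR : nat -> nat) : word -> word -> Prop :=
| pe_refl w : pres_eq fR w w
| pe_sym u v : pres_eq fR u v -> pres_eq fR v u
| pe_trans u v w : pres_eq fR u v -> pres_eq fR v w -> pres_eq fR u w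
| pe_free u v x b : pres_eq fR (u ++ (x, b) :: (x, ~~ b) :: v) (u ++ v)
| pe_rel u v r : rels fR r -> pres_eq fR (u ++ r ++ v) (u ++ v).

Definition TA (fX fR : nat -> nat) (A : int -> Prop) (i : nat) (w : word) : Prop :=
  word_over fX w /\ TorAn (pres_eq fR) cat winv [::] A i w.

Definition TAomega_set (fX fR : nat -> nat) (A : int -> Prop) (w : word) : Prop :=
  word_over fX w /\ TorAomega (pres_eq fR) cat winv [::] A w.

(* Main.v *)
Require Import Defs.
From mathcomp Require Import all_boot ssralg ssrnum ssrint.
From mathcomp Require Import zify.
Set Implicit Arguments. Unset Strict Implicit. Unset Printing Implicit Defensive.

Fixpoint nrec (z : nat) (s : nat -> nat -> nat) (k : nat) : nat :=
  match k with 0 => z | k'.+1 => s k' (nrec z s k') end.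

Lemma eval_rec os f g xs :
  pr_eval os (PRec f g) xs =
  nrec (pr_eval os f (behead xs)) (fun k acc => pr_eval os g [:: k, acc & behead xs]) (head 0 xs).
Proof. by rewrite /=; elim: (head 0 xs) => //= k ->. Qed.

Definition prf os n (f : seq nat -> nat) :=
  exists t, forall xs, size xs = n -> pr_eval os t xs = f xs.

Section Frame.
Variable os : seq (nat -> nat).

Lemma prf_ext n f g : (forall xs, size xs = n -> f xs = g xs) -> prf os n f -> prf os n g.
Proof. by move=> e [t ht]; exists t => xs hs; rewrite ht // e. Qed.

Lemma prf_proj n i : prf os n (fun xs => nth 0 xs i).
Proof. by exists (PProj i). Qed.

Fixpoint cst (c : nat) : pr := if c is c'.+1 then PComp PSucc [:: cst c'] else PZero.

Lemma prf_const n c : prf os n (fun _ => c).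
Proof. exists (cst c) => xs _; by elim: c => //= c ->. Qed.

Fixpoint prfs n (gs : seq (seq nat -> nat)) : Prop :=
  if gs is g :: gs' then prf os n g /\ prfs n gs' else True.

Lemma prfs_terms n gs : prfs n gs ->
  exists ts : seq pr, forall xs, size xs = n -> map (fun t => pr_eval os t xs) ts = map (fun g => g xs) gs.
Proof.
elim: gs => [|g gs IH] /=; first by exists [::].
case=> [[t ht] /IH [ts hts]]; exists (t :: ts) => xs hs /=.
by rewrite ht // hts.
Qed.

Lemma prf_comp n m f gs : prf os m f -> prfs n gs -> size gs = m ->
  prf os n (fun xs => f (map (fun g => g xs) gs)).
Proof.
move=> [tf hf] /prfs_terms [ts hts] hsz; exists (PComp tf ts) => xs hs /=.
by rewrite hts // hf // size_map.
Qed.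

Lemma prf_app1 n (h : nat -> nat) f :
  prf os 1 (fun xs => h (nth 0 xs 0)) -> prf os n f -> prf os n (fun xs => h (f xs)).
Proof. by move=> hh hf; apply: (prf_comp (gs := [:: f]) hh). Qed.

Lemma prf_app2 n (h : nat -> nat -> nat) f g :
  prf os 2 (fun xs => h (nth 0 xs 0) (nth 0 xs 1)) -> prf os n f -> prf os n g -> prf os n (fun xs => h (f xs) (g xs)).
Proof. by move=> hh hf hg; apply: (prf_comp (gs := [:: f; g]) hh). Qed.

Lemma prf_app3 n (h : nat -> nat -> nat -> nat) f g k :
  prf os 3 (fun xs => h (nth 0 xs 0) (nth 0 xs 1) (nth 0 xs 2)) -> prf os n f -> prf os n g -> prf os n k ->
  prf os n (fun xs => h (f xs) (g xs) (k xs)).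
Proof. by move=> hh hf hg hk; apply: (prf_comp (gs := [:: f; g; k]) hh). Qed.

Lemma prf_oracle n j : prf os n (fun xs => nth (fun _ => 0) os j (nth 0 xs 0)).
Proof. by exists (POracle j) => -[|x xs]. Qed.

Lemma prfs_projs n m l : prfs n (map (fun i xs => nth 0 xs i) (iota m l)).
Proof. by elim: l m => //= l IH m; split; [apply: prf_proj | apply: IH]. Qed.

Lemma map_projs (xs : seq nat) : map (fun g => g xs) (map (fun i xs => nth 0 xs i) (iota 0 (size xs))) = xs.
Proof. by rewrite -map_comp; exact: mkseq_nth. Qed.

Lemma prf_rec n (h f : seq nat -> nat) (g : nat -> nat -> seq nat -> nat) :
  prf os n h -> prf os n f ->
  prf os n.+2 (fun zs => g (nth 0 zs 0) (nth 0 zs 1) (behead (behead zs))) ->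
  prf os n (fun xs => nrec (f xs) (fun k acc => g k acc xs) (h xs)).
Proof.
move=> hh [tf hf] [tg hg].
have hr : prf os n.+1 (fun ys => nrec (f (behead ys)) (fun k acc => g k acc (behead ys)) (head 0 ys)).
  exists (PRec tf tg) => ys hs; rewrite eval_rec hf; last by rewrite size_behead hs.
  by elim: (head 0 ys) => //= k ->; rewrite hg //= size_behead hs.
have := prf_comp (n := n) (gs := h :: map (fun i xs => nth 0 xs i) (iota 0 n)) hr.
move=> H; apply: prf_ext (H _ _) => //=; last by rewrite size_map size_iota.
  by move=> xs hs /=; rewrite -hs map_projs.
by split => //; apply: prfs_projs.
Qed.

Definition bsum b (F : nat -> nat) := nrec 0 (fun k acc => acc + F k) b.

Lemma prf_drop1 n (G : seq nat -> nat) : prf os n.+1 G ->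
  prf os n.+2 (fun zs => G ((nth 0 zs 0) :: behead (behead zs))).
Proof.
move=> hG.
have := prf_comp (n := n.+2) (gs := (fun xs => nth 0 xs 0) :: map (fun i xs => nth 0 xs i) (iota 2 n)) hG.
move=> H; apply: prf_ext (H _ _) => /=; last by rewrite size_map size_iota.
  move=> [|z0 [|z1 zs]] //= [hs]; congr G; congr cons.
  rewrite -map_comp -[2]addn0 iotaDl -map_comp -hs.
  apply: (eq_trans _ (mkseq_nth 0 zs)); rewrite /mkseq; apply: eq_map => i /=.
  by rewrite add0n.
by split; [apply: prf_proj | apply: prfs_projs].
Qed.

Lemma prf_bsum n (b : seq nat -> nat) (F : nat -> seq nat -> nat) :
  prf os 2 (fun xs => (nth 0 xs 0) + (nth 0 xs 1)) ->
  prf os n b -> prf os n.+1 (fun ys => F (nth 0 ys 0) (behead ys)) ->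
  prf os n (fun xs => bsum (b xs) (fun j => F j xs)).
Proof.
move=> hadd hb hF; rewrite /bsum.
apply: (prf_rec (g := fun k acc xs => acc + F k xs)) => //; first exact: prf_const.
apply: (prf_app2 (h := addn) (f := fun zs => (nth 0 zs 1)) (g := fun zs => F (nth 0 zs 0) (behead (behead zs)))) => //.
  exact: prf_proj.
by have := prf_drop1 hF.
Qed.

End Frame.

Class PR1 os (h : nat -> nat) := pr1 : prf os 1 (fun xs => h (nth 0 xs 0)).
Class PR2 os (h : nat -> nat -> nat) := pr2 : prf os 2 (fun xs => h (nth 0 xs 0) (nth 0 xs 1)).
Class PR3 os (h : nat -> nat -> nat -> nat) :=
  pr3 : prf os 3 (fun xs => h (nth 0 xs 0) (nth 0 xs 1) (nth 0 xs 2)).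

Lemma prf_ap1 os n h {H : PR1 os h} f : prf os n f -> prf os n (fun xs => h (f xs)).
Proof. exact: prf_app1. Qed.
Lemma prf_ap2 os n h {H : PR2 os h} f g : prf os n f -> prf os n g -> prf os n (fun xs => h (f xs) (g xs)).
Proof. exact: prf_app2. Qed.
Lemma prf_ap3 os n h {H : PR3 os h} f g k : prf os n f -> prf os n g -> prf os n k ->
  prf os n (fun xs => h (f xs) (g xs) (k xs)).
Proof. exact: prf_app3. Qed.

Lemma prf_nth_iter os n k i : prf os n (fun xs => nth 0 (iter k behead xs) i).
Proof.
apply: prf_ext (prf_proj os n (k + i)) => xs _; symmetry.
by elim: k xs => // k IH xs; rewrite iterSr IH nth_behead addSn.
Qed.

#[export] Instance PR_S os : PR1 os S.
Proof. by exists PSucc => -[|x xs]. Qed.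

Ltac prf_leaf :=
  first [ exact (prf_nth_iter _ _ 0 _) | exact (prf_nth_iter _ _ 1 _) | exact (prf_nth_iter _ _ 2 _)
        | exact (prf_nth_iter _ _ 3 _) | exact (prf_nth_iter _ _ 4 _) | exact (prf_nth_iter _ _ 5 _)
        | exact (prf_nth_iter _ _ 6 _) | exact (prf_nth_iter _ _ 7 _) | exact (prf_nth_iter _ _ 8 _) ].

Ltac prf_solve :=
  cbv beta;
  lazymatch goal with
  | |- prf _ _ (fun _ => nth 0 _ _) => prf_leaf
  | |- prf _ _ (fun _ => ?c) => apply: prf_const
  | |- prf _ _ (fun xs => nrec (@?f xs) (fun k acc => @?g k acc xs) (@?h xs)) =>
      apply: (prf_rec (f:=f) (g:=g) (h:=h)); prf_solve
  | |- prf ?os _ (fun xs => bsum (@?b xs) (fun j => @?F j xs)) =>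
      apply: (prf_bsum (F:=F) (b:=b) (@pr2 os addn _)); prf_solve
  | |- prf _ _ (fun xs => ?h (@?f xs) (@?g xs) (@?k xs)) =>
      apply: (prf_ap3 (h:=h) (f:=f) (g:=g) (k:=k)); prf_solve
  | |- prf _ _ (fun xs => ?h (@?f xs) (@?g xs)) =>
      apply: (prf_ap2 (h:=h) (f:=f) (g:=g)); prf_solve
  | |- prf _ _ (fun xs => ?h (@?f xs)) =>
      apply: (prf_ap1 (h:=h) (f:=f)); prf_solve
  end.

#[export] Instance PR_add os : PR2 os addn.
Proof.
apply: (prf_ext (f := fun xs => nrec (nth 0 xs 0) (fun _ acc => acc.+1) (nth 0 xs 1))).
  by move=> xs _; elim: (nth 0 xs 1) => //= [|k ->]; rewrite ?addn0 ?addnS.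
prf_solve.
Qed.

#[export] Instance PR_mul os : PR2 os muln.
Proof.
apply: (prf_ext (f := fun xs => nrec 0 (fun _ acc => acc + nth 0 xs 0) (nth 0 xs 1))).
  by move=> xs _; elim: (nth 0 xs 1) => //= [|k ->]; rewrite ?muln0 // mulnS addnC.
prf_solve.
Qed.

#[export] Instance PR_pred os : PR1 os predn.
Proof.
apply: (prf_ext (f := fun xs => nrec 0 (fun k _ => k) (nth 0 xs 0))).
  by move=> xs _; case: (nth 0 xs 0).
prf_solve.
Qed.

#[export] Instance PR_sub os : PR2 os subn.
Proof.
apply: (prf_ext (f := fun xs => nrec (nth 0 xs 0) (fun _ acc => acc.-1) (nth 0 xs 1))).
  by move=> xs _; elim: (nth 0 xs 1) => //= [|k ->]; rewrite ?subn0 // subnS.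
prf_solve.
Qed.

#[export] Instance PR_exp os : PR2 os expn.
Proof.
apply: (prf_ext (f := fun xs => nrec 1 (fun _ acc => acc * nth 0 xs 0) (nth 0 xs 1))).
  by move=> xs _; elim: (nth 0 xs 1) => [|k IH] /=; rewrite ?expn0 // IH expnSr.
prf_solve.
Qed.

Definition nb (b : bool) : nat := b.
Definition sgn (n : nat) : nat := nb (0 < n).
Definition nodd (n : nat) : nat := nb (odd n).
Definition half (n : nat) : nat := n./2.
Definition shr (c e : nat) : nat := c %/ 2 ^ e.
Definition nlt (a b : nat) := nb (a < b).
Definition nle (a b : nat) := nb (a <= b).
Definition neq (a b : nat) := nb (a == b).
Definition nand (a b : nat) := nb ((a != 0) && (b != 0)).
Definition nor (a b : nat) := nb ((a != 0) || (b != 0)).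
Definition nnot (a : nat) := nb (a == 0).
Definition nif (c x y : nat) : nat := if c != 0 then x else y.

#[export] Instance PR_sgn os : PR1 os sgn.
Proof.
apply: (prf_ext (f := fun xs => nrec 0 (fun _ _ => 1) (nth 0 xs 0))).
  by move=> xs _; case: (nth 0 xs 0).
prf_solve.
Qed.

#[export] Instance PR_nodd os : PR1 os nodd.
Proof.
apply: (prf_ext (f := fun xs => nrec 0 (fun _ acc => 1 - acc) (nth 0 xs 0))).
  by move=> xs _; elim: (nth 0 xs 0) => [|k IH] //=; rewrite IH /nodd /nb /=; case: (odd k).
prf_solve.
Qed.

#[export] Instance PR_half os : PR1 os half.
Proof.
apply: (prf_ext (f := fun xs => nrec 0 (fun k acc => acc + nodd k) (nth 0 xs 0))).
  move=> xs _; elim: (nth 0 xs 0) => //= k ->.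
  by rewrite /half /= uphalf_half addnC.
prf_solve.
Qed.

#[export] Instance PR_shr os : PR2 os shr.
Proof.
apply: (prf_ext (f := fun xs => nrec (nth 0 xs 0) (fun _ acc => half acc) (nth 0 xs 1))).
  move=> xs _; elim: (nth 0 xs 1) => /= [|k ->]; first by rewrite /shr expn0 divn1.
  by rewrite /shr /half expnSr divnMA divn2.
prf_solve.
Qed.

Lemma nbE (b : bool) : (nb b != 0) = b. Proof. by case: b. Qed.

#[export] Instance PR_nlt os : PR2 os nlt.
Proof.
apply: (prf_ext (f := fun xs => sgn (nth 0 xs 1 - nth 0 xs 0))).
  by move=> xs _; rewrite /sgn /nlt subn_gt0.
prf_solve.
Qed.

#[export] Instance PR_nle os : PR2 os nle.
Proof.
apply: (prf_ext (f := fun xs => nlt (nth 0 xs 0) (nth 0 xs 1).+1)).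
  by move=> xs _; rewrite /nle /nlt ltnS.
prf_solve.
Qed.

#[export] Instance PR_neq os : PR2 os neq.
Proof.
apply: (prf_ext (f := fun xs => nle (nth 0 xs 0) (nth 0 xs 1) * nle (nth 0 xs 1) (nth 0 xs 0))).
  by move=> xs _; rewrite /nle /neq /nb eqn_leq; case: (_ <= _); case: (_ <= _).
prf_solve.
Qed.

#[export] Instance PR_nand os : PR2 os nand.
Proof.
apply: (prf_ext (f := fun xs => sgn (nth 0 xs 0) * sgn (nth 0 xs 1))).
  by move=> xs _; rewrite /nand /sgn /nb !lt0n; case: (_ != 0); case: (_ != 0).
prf_solve.
Qed.

#[export] Instance PR_nor os : PR2 os nor.
Proof.
apply: (prf_ext (f := fun xs => sgn (nth 0 xs 0 + nth 0 xs 1))).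
  by move=> xs _; rewrite /nor /sgn addn_gt0 !lt0n.
prf_solve.
Qed.

#[export] Instance PR_nnot os : PR1 os nnot.
Proof.
apply: (prf_ext (f := fun xs => 1 - sgn (nth 0 xs 0))).
  by move=> xs _; rewrite /nnot /sgn; case: (nth 0 xs 0).
prf_solve.
Qed.

#[export] Instance PR_nif os : PR3 os nif.
Proof.
apply: (prf_ext (f := fun xs => sgn (nth 0 xs 0) * nth 0 xs 1 + nnot (nth 0 xs 0) * nth 0 xs 2)).
  by move=> xs _; rewrite /nif /sgn /nnot; case: (nth 0 xs 0) => //= *; rewrite ?mul0n ?mul1n ?addn0 ?add0n.
prf_solve.
Qed.

Definition mu (P : nat -> nat) b :=
  nrec 0 (fun k acc => nif (nlt acc k) acc (nif (P k) k k.+1)) b.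

Lemma mu_S P b : mu P b.+1 = nif (nlt (mu P b) b) (mu P b) (nif (P b) b b.+1).
Proof. by []. Qed.

Lemma mu_spec P b n : n <= b -> (n < b -> P n != 0) -> (forall e, e < n -> P e = 0) -> mu P b = n.
Proof.
elim: b n => [|b IH] n; first by rewrite leqn0 => /eqP ->.
move=> hnb hPn hlt; rewrite mu_S /nif /nlt /nb.
rewrite leq_eqVlt in hnb; case/orP: hnb => [/eqP hn|hnb].
  have hm : mu P b = b.
    apply: IH; [by [] | by rewrite ltnn | ].
    by move=> e he; apply: hlt; rewrite hn ltnS ltnW.
  by rewrite hm ltnn /= (hlt b) ?hn.
have hm : mu P b = n.
  apply: IH; [by rewrite -ltnS | | exact: hlt].
  by move=> hn; apply: hPn; apply: ltn_trans hn _.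
rewrite hm; case: (ltngtP n b) => h //=.
- by exfalso; lia.
- by rewrite -h (hPn hnb).
Qed.

Definition v2 (c : nat) := mu (fun e => nodd (shr c e)) c.
Definition tlc (c : nat) := half (shr c (v2 c)).
Definition tls (c j : nat) := nrec c (fun _ acc => tlc acc) j.
Definition nthc (c j : nat) := v2 (tls c j).
Definition lenc (c : nat) := bsum c (fun j => sgn (tls c j)).
Definition bs (c : nat) := mu (fun m => nlt c (2 ^ m)) c.+1.
Definition catc (a b : nat) := a + 2 ^ (bs a) * b.
Definition powc (s n : nat) := nrec 0 (fun _ acc => catc s acc) n.
Definition code2 (a b : nat) := 2 ^ a * (2 ^ b * 2 + 1).

#[export] Instance PR_v2 os : PR1 os v2.
Proof. rewrite /PR1 /v2 /mu; prf_solve. Qed.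
#[export] Instance PR_tlc os : PR1 os tlc.
Proof. rewrite /PR1 /tlc; prf_solve. Qed.
#[export] Instance PR_tls os : PR2 os tls.
Proof. rewrite /PR2 /tls; prf_solve. Qed.
#[export] Instance PR_nthc os : PR2 os nthc.
Proof. rewrite /PR2 /nthc; prf_solve. Qed.
#[export] Instance PR_lenc os : PR1 os lenc.
Proof. rewrite /PR1 /lenc; prf_solve. Qed.
#[export] Instance PR_bs os : PR1 os bs.
Proof. rewrite /PR1 /bs /mu; prf_solve. Qed.
#[export] Instance PR_catc os : PR2 os catc.
Proof. rewrite /PR2 /catc; prf_solve. Qed.
#[export] Instance PR_powc os : PR2 os powc.
Proof. rewrite /PR2 /powc; prf_solve. Qed.
#[export] Instance PR_code2 os : PR2 os code2.
Proof. rewrite /PR2 /code2; prf_solve. Qed.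

Notation code := CodeSeq.code.
Notation decode := CodeSeq.decode.

Lemma codeS n s : code (n :: s) = 2 ^ n * (code s).*2.+1.
Proof. by []. Qed.

Lemma code_inj : injective code.
Proof. exact: can_inj CodeSeq.codeK. Qed.

Lemma code_gt0 s : (0 < code s) = (s != [::]).
Proof. by case: s => //= n s; rewrite muln_gt0 expn_gt0. Qed.

Lemma shr_code n s e : e <= n -> shr (code (n :: s)) e = 2 ^ (n - e) * (code s).*2.+1.
Proof.
move=> h; rewrite /shr codeS -{1}(subnKC h) expnD -mulnA mulKn //.
by rewrite expn_gt0.
Qed.

Lemma v2_code n s : v2 (code (n :: s)) = n.
Proof.
apply: mu_spec.
- apply: ltnW; apply: (leq_trans (ltn_expl n (ltnSn 1))); rewrite codeS.
  by rewrite -{1}[2 ^ n]muln1 leq_mul2l ltn0Sn orbT.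
- by move=> _; rewrite shr_code // subnn expn0 mul1n /nodd /= odd_double.
- move=> e he; rewrite shr_code; last exact: ltnW.
  rewrite /nodd oddM oddX orbF.
  by rewrite subn_eq0 leqNgt he.
Qed.

Lemma v2_0 : v2 0 = 0. Proof. by []. Qed.

Lemma tlc_code s : tlc (code s) = code (behead s).
Proof.
case: s => [|n s]; first by [].
rewrite /tlc v2_code shr_code // subnn expn0 mul1n; exact: uphalf_double.
Qed.

Lemma tls_code s j : tls (code s) j = code (drop j s).
Proof.
elim: j => [|j IH]; first by rewrite drop0.
by rewrite (_ : tls _ j.+1 = tlc (tls (code s) j)) // IH tlc_code -drop1 drop_drop //=.
Qed.

Lemma nthc_code s j : nthc (code s) j = nth 0 s j.
Proof.
rewrite /nthc tls_code; case: (ltnP j (size s)) => h.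
  by rewrite (drop_nth 0 h) v2_code.
by rewrite drop_oversize // nth_default.
Qed.

Lemma nthcE c j : nthc c j = nth 0 (decode c) j.
Proof. by rewrite -nthc_code CodeSeq.decodeK. Qed.

Lemma size_le_code s : size s <= code s.
Proof.
elim: s => // n s IH; rewrite codeS /=.
apply: (leq_trans _ (leq_pmull _ (expn_gt0 2 n))); rewrite ltnS -addnn.
exact: leq_trans IH (leq_addr _ _).
Qed.

Lemma bsum_S b F : bsum b.+1 F = bsum b F + F b. Proof. by []. Qed.
Lemma eq_bsum b F G : (forall j, j < b -> F j = G j) -> bsum b F = bsum b G.
Proof. by elim: b => // b IH h; rewrite !bsum_S IH ?h // => j hj; apply: h; apply: ltnW. Qed.

Lemma bsum_lt b m : bsum b (fun j => nb (j < m)) = minn b m.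
Proof.
elim: b => [|b IH]; first by rewrite min0n.
rewrite bsum_S IH /nb; case: (ltnP b m) => h /=; lia.
Qed.

Lemma lenc_code s : lenc (code s) = size s.
Proof.
rewrite /lenc.
have -> : bsum (code s) (fun j => sgn (tls (code s) j)) = bsum (code s) (fun j => nb (j < size s)).
  apply: eq_bsum => j _.
  by rewrite tls_code /sgn code_gt0 -size_eq0 size_drop subn_eq0 -ltnNge.
by rewrite bsum_lt; apply/minn_idPr; exact: size_le_code.
Qed.

Lemma lencE c : lenc c = size (decode c).
Proof. by rewrite -lenc_code CodeSeq.decodeK. Qed.

Fixpoint Lb (s : seq nat) := if s is n :: s' then n.+1 + Lb s' else 0.

Lemma code_lt s : code s < 2 ^ Lb s.
Proof.
elim: s => // n s IH; rewrite codeS /= addSn expnS expnD mulnCA ltn_mul2l expn_gt0 /=.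
by rewrite -muln2 mulnC; lia.
Qed.

Lemma code_low s : 2 ^ Lb s <= (code s).*2.+1.
Proof.
elim: s => // n s IH; rewrite codeS /= addSn expnS expnD.
have h1 : 2 ^ n * 2 ^ Lb s <= 2 ^ n * (code s).*2.+1 by rewrite leq_mul2l IH orbT.
rewrite -!muln2 in h1 *; lia.
Qed.

Lemma bs_code s : bs (code s) = Lb s.
Proof.
have low : forall e, e < Lb s -> 2 ^ e <= code s.
  move=> e he; have := code_low s; move: he; case: (Lb s) => // L he.
  rewrite expnS -muln2 => h; have : 2 ^ e <= 2 ^ L by rewrite leq_exp2l.
  lia.
apply: mu_spec.
- rewrite leqNgt; apply/negP => h.
  have := low _ h; rewrite leqNgt; case/negP; exact: (ltn_trans (ltnSn _) (ltn_expl _ (ltnSn 1))).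
- by move=> _; rewrite /nlt /nb code_lt.
- by move=> e he; rewrite /nlt /nb ltnNge low.
Qed.

Lemma catc_code s t : catc (code s) (code t) = code (s ++ t).
Proof.
rewrite /catc bs_code; elim: s => [|n s IH]; first by rewrite /= expn0 mul1n.
rewrite cat_cons !codeS -IH [Lb _]/= addSn expnS expnD.
set X := 2 ^ n; set Y := 2 ^ Lb s; rewrite -!muln2; nia.
Qed.

Lemma catcE a b : catc a b = code (decode a ++ decode b).
Proof. by rewrite -catc_code !CodeSeq.decodeK. Qed.

Lemma code2E a b : code2 a b = code [:: a; b].
Proof. by rewrite /code2 !codeS /= muln1 -muln2 addn1. Qed.

Definition pl (l : letter) : nat := code [:: l.1; nat_of_bool l.2].

Lemma pickleE (w : word) : pickle w = code (map pl w).
Proof. by []. Qed.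

Lemma pl_inj : injective pl.
Proof.
move=> [x b] [y c]; rewrite /pl => /code_inj [-> h]; congr pair.
by case: b c h => [] [].
Qed.

Lemma catc_pickle (u v : word) : catc (pickle u) (pickle v) = pickle (u ++ v).
Proof. by rewrite !pickleE catc_code map_cat. Qed.

Definition wpow (s : word) n := iter n (cat s) [::].

Lemma powc_pickle s n : powc (pickle s) n = pickle (wpow s n).
Proof. by elim: n => // n IH; rewrite (_ : powc _ n.+1 = catc (pickle s) (powc (pickle s) n)) // IH catc_pickle. Qed.

Lemma catc_split p q (u : word) : catc p q = pickle u ->
  exists u1 u2, [/\ u = u1 ++ u2, p = pickle u1 & q = pickle u2].
Proof.
rewrite catcE pickleE => /code_inj e.
exists (take (size (decode p)) u), (drop (size (decode p)) u); split.
- by rewrite cat_take_drop.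
- by rewrite pickleE map_take -e take_size_cat // CodeSeq.decodeK.
- by rewrite pickleE map_drop -e drop_size_cat // CodeSeq.decodeK.
Qed.

Fixpoint all_P (P : pr -> Prop) (gs : seq pr) : Prop :=
  if gs is g :: gs' then P g /\ all_P P gs' else True.

Fixpoint pr_ind' (P : pr -> Prop) (h0 : P PZero) (hs : P PSucc) (hp : forall i, P (PProj i))
  (ho : forall j, P (POracle j)) (hc : forall f gs, P f -> all_P P gs -> P (PComp f gs))
  (hr : forall f g, P f -> P g -> P (PRec f g)) (t : pr) {struct t} : P t :=
  match t with
  | PZero => h0 | PSucc => hs | PProj i => hp i | POracle j => ho j
  | PComp f gs => hc f gs (pr_ind' h0 hs hp ho hc hr f)
      ((fix F (gs : seq pr) : all_P P gs :=
          match gs return all_P P gs with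
          | [::] => I
          | g :: gs' => conj (pr_ind' h0 hs hp ho hc hr g) (F gs')
          end) gs)
  | PRec f g => hr f g (pr_ind' h0 hs hp ho hc hr f) (pr_ind' h0 hs hp ho hc hr g)
  end.

Fixpoint deor (t : pr) : pr :=
  match t with
  | POracle _ => PZero
  | PComp f gs => PComp (deor f) (map deor gs)
  | PRec f g => PRec (deor f) (deor g)
  | t => t
  end.

Lemma deor_eval os t xs : pr_eval os (deor t) xs = pr_eval [::] t xs.
Proof.
elim/pr_ind': t xs => //=.
- by move=> j xs; rewrite nth_nil.
- move=> f gs IHf IHgs xs; rewrite IHf; congr (pr_eval _ f).
  elim: gs IHgs => //= g gs IH [hg hgs]; by rewrite hg IH.
- move=> f g IHf IHg xs; elim: (head 0 xs) => //= k ->; by rewrite IHg.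
Qed.

Section Subst.
Variables (tX tR : pr) (fX fR : nat -> nat).
Hypotheses (hX : forall n, pr_eval [::] tX [:: n] = fX n) (hR : forall n, pr_eval [::] tR [:: n] = fR n).

Fixpoint osubst (t : pr) : pr :=
  match t with
  | POracle 0 => PComp tX [:: PProj 0]
  | POracle 1 => PComp tR [:: PProj 0]
  | POracle _ => PZero
  | PComp f gs => PComp (osubst f) (map osubst gs)
  | PRec f g => PRec (osubst f) (osubst g)
  | t => t
  end.

Lemma osubst_eval t xs : pr_eval [::] (osubst t) xs = pr_eval [:: fX; fR] t xs.
Proof.
elim/pr_ind': t xs => //=.
- move=> j ys; case: j => [|[|j]]; rewrite /= ?hX ?hR ?nth_nil; by case: ys.
- move=> f gs IHf IHgs xs; rewrite IHf; congr (pr_eval _ f).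
  elim: gs IHgs => //= g gs IH [hg hgs]; by rewrite hg IH.
- move=> f g IHf IHg xs; elim: (head 0 xs) => //= k ->; by rewrite IHg.
Qed.
End Subst.

Definition uprf n (f : seq (nat -> nat) -> seq nat -> nat) :=
  exists t, forall os xs, size xs = n -> pr_eval os t xs = f os xs.

Lemma uprf_lift n g : prf [::] n g -> uprf n (fun _ xs => g xs).
Proof. by case=> t ht; exists (deor t) => os xs hs; rewrite deor_eval ht. Qed.

Lemma uprf_ext n f g : (forall os xs, size xs = n -> f os xs = g os xs) -> uprf n f -> uprf n g.
Proof. by move=> e [t ht]; exists t => os xs hs; rewrite ht // e. Qed.

Lemma uprf_proj n i : uprf n (fun _ xs => nth 0 xs i).
Proof. by exists (PProj i). Qed.

Lemma uprf_const n c : uprf n (fun _ _ => c).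
Proof. exact: uprf_lift (prf_const _ _ _). Qed.

Fixpoint uprfs n (gs : seq (seq (nat -> nat) -> seq nat -> nat)) : Prop :=
  if gs is g :: gs' then uprf n g /\ uprfs n gs' else True.

Lemma uprfs_terms n gs : uprfs n gs ->
  exists ts : seq pr, forall os xs, size xs = n ->
    map (fun t => pr_eval os t xs) ts = map (fun g => g os xs) gs.
Proof.
elim: gs => [|g gs IH] /=; first by exists [::].
case=> [[t ht] /IH [ts hts]]; exists (t :: ts) => os xs hs /=.
by rewrite ht // hts.
Qed.

Lemma uprf_comp n m f gs : uprf m f -> uprfs n gs -> size gs = m ->
  uprf n (fun os xs => f os (map (fun g => g os xs) gs)).
Proof.
move=> [tf hf] /uprfs_terms [ts hts] hsz; exists (PComp tf ts) => os xs hs /=.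
by rewrite hts // hf // size_map.
Qed.

Lemma uprf_ap1 n h {H : PR1 [::] h} f : uprf n f -> uprf n (fun os xs => h (f os xs)).
Proof. by move=> hf; apply: (uprf_comp (gs := [:: f]) (uprf_lift H)). Qed.
Lemma uprf_ap2 n h {H : PR2 [::] h} f g : uprf n f -> uprf n g ->
  uprf n (fun os xs => h (f os xs) (g os xs)).
Proof. by move=> hf hg; apply: (uprf_comp (gs := [:: f; g]) (uprf_lift H)). Qed.
Lemma uprf_ap3 n h {H : PR3 [::] h} f g k : uprf n f -> uprf n g -> uprf n k ->
  uprf n (fun os xs => h (f os xs) (g os xs) (k os xs)).
Proof. by move=> hf hg hk; apply: (uprf_comp (gs := [:: f; g; k]) (uprf_lift H)). Qed.

Lemma uprf_orc n j f : uprf n f -> uprf n (fun os xs => nth (fun _ => 0) os j (f os xs)).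
Proof.
move=> hf; have ho : uprf 1 (fun os xs => nth (fun _ => 0) os j (nth 0 xs 0)).
  by exists (POracle j) => os [|x xs].
exact: (uprf_comp (gs := [:: f]) ho).
Qed.

Lemma uprfs_projs n m l : uprfs n (map (fun i _ xs => nth 0 xs i) (iota m l)).
Proof. by elim: l m => //= l IH m; split; [apply: uprf_proj | apply: IH]. Qed.

Lemma umap_projs os (xs : seq nat) :
  map (fun g => g os xs) (map (fun i (_ : seq (nat -> nat)) xs => nth 0 xs i) (iota 0 (size xs))) = xs.
Proof. by rewrite -map_comp; exact: mkseq_nth. Qed.

Lemma uprf_rec n (h f : seq (nat -> nat) -> seq nat -> nat) (g : seq (nat -> nat) -> nat -> nat -> seq nat -> nat) :
  uprf n h -> uprf n f ->
  uprf n.+2 (fun os zs => g os (nth 0 zs 0) (nth 0 zs 1) (behead (behead zs))) ->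
  uprf n (fun os xs => nrec (f os xs) (fun k acc => g os k acc xs) (h os xs)).
Proof.
move=> hh [tf hf] [tg hg].
have hr : uprf n.+1 (fun os ys => nrec (f os (behead ys)) (fun k acc => g os k acc (behead ys)) (head 0 ys)).
  exists (PRec tf tg) => os ys hs; rewrite eval_rec hf; last by rewrite size_behead hs.
  by elim: (head 0 ys) => //= k ->; rewrite hg //= size_behead hs.
have := uprf_comp (n := n) (gs := h :: map (fun i _ xs => nth 0 xs i) (iota 0 n)) hr.
move=> H; apply: uprf_ext (H _ _) => //=; last by rewrite size_map size_iota.
  by move=> os xs hs /=; rewrite -hs umap_projs.
by split => //; apply: uprfs_projs.
Qed.

Lemma uprf_drop1 n (G : seq (nat -> nat) -> seq nat -> nat) : uprf n.+1 G ->
  uprf n.+2 (fun os zs => G os (nth 0 zs 0 :: behead (behead zs))).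
Proof.
move=> hG.
have := uprf_comp (n := n.+2) (gs := (fun _ xs => nth 0 xs 0) :: map (fun i _ xs => nth 0 xs i) (iota 2 n)) hG.
move=> H; apply: uprf_ext (H _ _) => /=; last by rewrite size_map size_iota.
  move=> os [|z0 [|z1 zs]] //= [hs]; congr G; congr cons.
  rewrite -map_comp -[2]addn0 iotaDl -map_comp -hs.
  apply: (eq_trans _ (mkseq_nth 0 zs)); rewrite /mkseq; apply: eq_map => i /=.
  by rewrite add0n.
by split; [apply: uprf_proj | apply: uprfs_projs].
Qed.

Lemma uprf_bsum n (b : seq (nat -> nat) -> seq nat -> nat) (F : seq (nat -> nat) -> nat -> seq nat -> nat) :
  uprf n b -> uprf n.+1 (fun os ys => F os (nth 0 ys 0) (behead ys)) ->
  uprf n (fun os xs => bsum (b os xs) (fun j => F os j xs)).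
Proof.
move=> hb hF; rewrite /bsum.
apply: (uprf_rec (g := fun os k acc xs => acc + F os k xs)) => //; first exact: uprf_const.
apply: (uprf_ap2 (h := addn) (f := fun _ zs => (nth 0 zs 1)) (g := fun os zs => F os (nth 0 zs 0) (behead (behead zs)))) => //.
  exact: uprf_proj.
by have := uprf_drop1 hF.
Qed.

Lemma uprf_nth_iter n k i : uprf n (fun _ xs => nth 0 (iter k behead xs) i).
Proof. exact: uprf_lift (prf_nth_iter _ _ _ _). Qed.

Ltac uprf_leaf :=
  first [ exact (uprf_nth_iter _ 0 _) | exact (uprf_nth_iter _ 1 _) | exact (uprf_nth_iter _ 2 _)
        | exact (uprf_nth_iter _ 3 _) | exact (uprf_nth_iter _ 4 _) | exact (uprf_nth_iter _ 5 _)
        | exact (uprf_nth_iter _ 6 _) | exact (uprf_nth_iter _ 7 _) | exact (uprf_nth_iter _ 8 _) ].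

Ltac uprf_solve :=
  cbv beta;
  lazymatch goal with
  | |- uprf _ (fun _ _ => nth 0 _ _) => uprf_leaf
  | |- uprf _ (fun _ _ => ?c) => apply: uprf_const
  | |- uprf _ (fun os xs => nth (fun _ => 0) os ?j (@?f os xs)) =>
      apply: (@uprf_orc _ j f); uprf_solve
  | |- uprf _ (fun os xs => nrec (@?f os xs) (fun k acc => @?g os k acc xs) (@?h os xs)) =>
      apply: (uprf_rec (f:=f) (g:=g) (h:=h)); uprf_solve
  | |- uprf _ (fun os xs => bsum (@?b os xs) (fun j => @?F os j xs)) =>
      apply: (uprf_bsum (F:=F) (b:=b)); uprf_solve
  | |- uprf _ (fun os xs => ?h (@?f os xs) (@?g os xs) (@?k os xs)) =>
      apply: (uprf_ap3 (h:=h) (f:=f) (g:=g) (k:=k)); uprf_solve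
  | |- uprf _ (fun os xs => ?h (@?f os xs) (@?g os xs)) =>
      apply: (uprf_ap2 (h:=h) (f:=f) (g:=g)); uprf_solve
  | |- uprf _ (fun os xs => ?h (@?f os xs)) =>
      apply: (uprf_ap1 (h:=h) (f:=f)); uprf_solve
  end.

Definition bex b (F : nat -> nat) := sgn (bsum b F).
Definition ball b (F : nat -> nat) := nnot (bsum b (fun j => nnot (F j))).

Section Checker.
Variables (fX fR : nat -> nat) (fA : nat -> nat -> nat).

Definition check1 (hs : nat -> nat -> nat) (e : nat) : nat :=
  nand (nif (nthc e 7)
            (nand (sgn (fR (nthc e 10)))
                  (hs 0 (catc (nthc e 11) (predn (fR (nthc e 10))))))
            (nle (nthc e 9) 1))
  (nand (hs (nthc e 1) (nthc e 3))
  (nif (nthc e 6)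
     (nand (neq (nthc e 3) (catc (nthc e 4) (nthc e 5)))
           (neq (nthc e 2) (catc (nthc e 4)
               (catc (nif (nthc e 7) (predn (fR (nthc e 10)))
                      (code2 (code2 (nthc e 8) (nthc e 9)) (code2 (nthc e 8) (1 - nthc e 9))))
                     (nthc e 5)))))
     (nand (neq (nthc e 3) (catc (nthc e 4)
               (catc (nif (nthc e 7) (predn (fR (nthc e 10)))
                      (code2 (code2 (nthc e 8) (nthc e 9)) (code2 (nthc e 8) (1 - nthc e 9))))
                     (nthc e 5))))
           (neq (nthc e 2) (catc (nthc e 4) (nthc e 5)))))).

Definition check2 (hs : nat -> nat -> nat) (e : nat) : nat :=
  nand (sgn (nthc e 1))
  (nand (hs (nthc e 1) (nthc e 3))
  (nand (hs (predn (nthc e 1)) (powc (nthc e 4) (nif (nthc e 5) (nthc e 6).+1 (nthc e 6))))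
  (nand (sgn (fA (nthc e 7) (nif (nthc e 5) (code2 0 (2 ^ nthc e 6)) (code2 (2 ^ nthc e 6) 0))))
  (nand (hs 0 (catc (nthc e 8) (nthc e 9)))
  (nand (hs 0 (catc (nthc e 10) (nthc e 4)))
        (neq (nthc e 2) (catc (nthc e 3) (catc (nthc e 8) (catc (nthc e 4) (nthc e 9)))))))))).

Definition check (hs : nat -> nat -> nat) (e : nat) : nat :=
  nor (nand (neq (nthc e 0) 0) (neq (nthc e 2) 0))
  (nor (nand (neq (nthc e 0) 1) (check1 hs e))
       (nand (neq (nthc e 0) 2) (check2 hs e))).

Definition hasin dc j l u :=
  bex j (fun j' => nand (neq (nthc (nthc dc j') 1) l) (neq (nthc (nthc dc j') 2) u)).

Definition valid dc := ball (lenc dc) (fun j => check (hasin dc j) (nthc dc j)).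

Definition wover ec x := ball (lenc x) (fun m => neq (fX (nthc ec m)) (nthc (nthc x m) 0).+1).

Definition Core dc ec i x := nand (valid dc) (nand (hasin dc (lenc dc) i x) (wover ec x)).

End Checker.

Lemma uprf_Core1 fA : PR2 [::] fA ->
  uprf 3 (fun os xs => Core (nth (fun _ => 0) os 0) (nth (fun _ => 0) os 1) fA
                           (nthc (nth 0 xs 0) 0) (nthc (nth 0 xs 0) 1) (nth 0 xs 1) (nth 0 xs 2)).
Proof.
move=> HA.
rewrite /Core /valid /wover /check /check1 /check2 /hasin /ball /bex.
uprf_solve.
Qed.

Lemma uprf_Core2 fA : PR2 [::] fA ->
  uprf 2 (fun os xs => Core (nth (fun _ => 0) os 0) (nth (fun _ => 0) os 1) fA
                           (nthc (nth 0 xs 0) 0) (nthc (nth 0 xs 0) 1) (nthc (nth 0 xs 0) 2) (nth 0 xs 1)).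
Proof.
move=> HA.
rewrite /Core /valid /wover /check /check1 /check2 /hasin /ball /bex.
uprf_solve.
Qed.

Lemma winv_cat (u v : word) : winv (u ++ v) = winv v ++ winv u.
Proof. by rewrite /winv map_cat rev_cat. Qed.

Lemma winvK (u : word) : winv (winv u) = u.
Proof.
rewrite /winv map_rev revK -map_comp -[RHS]map_id; apply: eq_map => -[x b] /=.
by rewrite negbK.
Qed.

Lemma winv_nil : winv [::] = [::]. Proof. by []. Qed.

Lemma winv_cons (l : letter) u : winv (l :: u) = winv u ++ [:: (l.1, ~~ l.2)].
Proof. by rewrite -cat1s winv_cat. Qed.

Lemma wpow_Sr (s : word) n : wpow s n.+1 = wpow s n ++ s.
Proof. by elim: n => [|n IH] /=; rewrite ?cats0 // -catA -IH. Qed.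

Lemma wpow_winv s n : wpow (winv s) n = winv (wpow s n).
Proof. by elim: n => // n IH; rewrite wpow_Sr winv_cat -IH. Qed.

Definition absn (a : int) : nat := match a with Posz m => m | Negz m => m.+1 end.

Section Group.
Variable fR : nat -> nat.
Local Notation peq := (pres_eq fR).

Lemma peq_ctx u v a b : peq u v -> peq (a ++ u ++ b) (a ++ v ++ b).
Proof.
elim=> {u v} [w|u v _ IH|u v w _ IH1 _ IH2|u v x c|u v r hr].
- exact: pe_refl.
- exact: pe_sym.
- exact: pe_trans IH1 IH2.
- have -> : a ++ (u ++ [:: (x, c), (x, ~~ c) & v]) ++ b = (a ++ u) ++ [:: (x, c), (x, ~~ c) & v ++ b].
    by rewrite -!catA.
  rewrite (_ : a ++ (u ++ v) ++ b = (a ++ u) ++ (v ++ b)); last by rewrite -!catA.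
  exact: pe_free.
- have -> : a ++ (u ++ r ++ v) ++ b = (a ++ u) ++ r ++ (v ++ b) by rewrite -!catA.
  rewrite (_ : a ++ (u ++ v) ++ b = (a ++ u) ++ (v ++ b)); last by rewrite -!catA.
  exact: pe_rel.
Qed.

Lemma peq_cat u u' v v' : peq u u' -> peq v v' -> peq (u ++ v) (u' ++ v').
Proof.
move=> h1 h2; apply: (pe_trans (v := u' ++ v)).
  by have := peq_ctx [::] v h1; rewrite /= .
by have := peq_ctx u' [::] h2; rewrite !cats0.
Qed.

Lemma peq_invr w : peq (w ++ winv w) [::].
Proof.
elim: w => [|[x b] w IH]; first exact: pe_refl.
rewrite winv_cons /=.
apply: (pe_trans (v := [:: (x, b); (x, ~~ b)])).
  have := peq_ctx [:: (x, b)] [:: (x, ~~ b)] IH; by rewrite /= -!catA.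
exact: (pe_free fR [::] [::] x b).
Qed.

Lemma peq_invl w : peq (winv w ++ w) [::].
Proof. by have := peq_invr (winv w); rewrite winvK. Qed.

Lemma peq_winv u v : peq u v -> peq (winv u) (winv v).
Proof.
move=> h.
apply: (pe_trans (v := winv u ++ (v ++ winv v))).
  by have := peq_cat (pe_refl fR (winv u)) (pe_sym (peq_invr v)); rewrite cats0.
apply: (pe_trans (v := winv u ++ (u ++ winv v))).
  apply: peq_cat; first exact: pe_refl.
  by apply: peq_cat; [apply: pe_sym | apply: pe_refl].
rewrite catA; have := peq_cat (peq_invl u) (pe_refl fR (winv v)); by [].
Qed.

Lemma peq_invu c' c : peq (c' ++ c) [::] -> peq c' (winv c).
Proof.
move=> h; apply: (pe_trans (v := c' ++ (c ++ winv c))).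
  by have := peq_cat (pe_refl fR c') (pe_sym (peq_invr c)); rewrite cats0.
rewrite catA; have := peq_cat h (pe_refl fR (winv c)); by [].
Qed.

Variable A : int -> Prop.
Local Notation Tor := (TorAn peq cat winv [::] A).

Lemma NC_normal S : normal_subgroup peq cat winv [::] (normal_closure peq cat winv [::] S).
Proof.
split.
- by move=> g h e Hg N hN hS; case: (hN) => h1 _ _ _ _; exact: h1 e (Hg N hN hS).
- by move=> N [h1 h2 h3 h4 h5] hS.
- by move=> g h Hg Hh N hN hS; case: (hN) => _ _ h3 _ _; apply: h3; [apply: Hg | apply: Hh].
- by move=> g Hg N hN hS; case: (hN) => _ _ _ h4 _; apply: h4; apply: Hg.
- by move=> g h Hg N hN hS; case: (hN) => _ _ _ _ h5; apply: h5; apply: Hg.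
Qed.

Lemma Tor_eqv l u v : peq u v -> Tor l u -> Tor l v.
Proof.
case: l => [|l] /= e h; first exact: pe_trans (pe_sym e) h.
by case: (NC_normal (fun g => exists a, A a /\ Tor l (gpow cat winv [::] g a))) => h1 _ _ _ _; apply: h1 e h.
Qed.

Lemma Tor_inv l u : Tor l u -> Tor l (winv u).
Proof.
case: l => [|l] /= h.
  apply: (pe_trans (v := winv u ++ u)); last exact: peq_invl.
  by have := peq_cat (pe_refl fR (winv u)) (pe_sym h); rewrite cats0.
by case: (NC_normal (fun g => exists a, A a /\ Tor l (gpow cat winv [::] g a))) => _ _ _ h4 _; apply: h4.
Qed.

Lemma Tor_one l : Tor l [::].
Proof.
case: l => [|l] /=; first exact: pe_refl.
by case: (NC_normal (fun g => exists a, A a /\ Tor l (gpow cat winv [::] g a))).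
Qed.

Lemma Tor_gpow l s a : Tor l (gpow cat winv [::] s a) <-> Tor l (wpow s (absn a)).
Proof.
case: a => [m|m] //=; split => h; first by move: (Tor_inv h); rewrite winvK.
exact: Tor_inv.
Qed.

Definition elem (m : word) := (exists x b, m = [:: (x, b); (x, ~~ b)]) \/ rels fR m.

Inductive Der : nat -> word -> Prop :=
| Der_one l : Der l [::]
| Der_del l p q m : Der l (p ++ m ++ q) -> elem m -> Der l (p ++ q)
| Der_ins l p q m : Der l (p ++ q) -> elem m -> Der l (p ++ m ++ q)
| Der_conj l u s a c' c : Der l.+1 u -> Der l (wpow s (absn a)) -> A a ->
    Der 0 (c' ++ c) -> Der l.+1 (u ++ c' ++ s ++ c).

Lemma elem_peq p q m : elem m -> peq (p ++ m ++ q) (p ++ q).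
Proof. by case=> [[x [b ->]]|hr]; [apply: pe_free | apply: pe_rel]. Qed.

Lemma Der_sound l w : Der l w -> Tor l w.
Proof.
elim=> {l w} [l|l p q m _ IH hm|l p q m _ IH hm|l u s a c' c _ IHu _ IHs hA _ IHc].
- exact: Tor_one.
- exact: Tor_eqv (elem_peq p q hm) IH.
- exact: Tor_eqv (pe_sym (elem_peq p q hm)) IH.
- move=> N hN hS; case: (hN) => h1 h2 h3 h4 h5.
  apply: h3; first exact: IHu.
  have hs : N s by apply: hS; exists a; split => //; apply/Tor_gpow.
  have := h5 _ c hs; apply: h1.
  rewrite -catA; apply: peq_cat; last exact: pe_refl.
  apply: pe_sym; exact: peq_invu.
Qed.

Lemma Der_peq l u v : peq u v -> Der l u <-> Der l v.
Proof.
elim=> {u v} [w|u v _ IH|u v w _ IH1 _ IH2|u v x b|u v r hr].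
- by [].
- by split => h; apply/IH.
- by split => h; [apply/IH2/IH1 | apply/IH1/IH2].
- split => h.
    by apply: (Der_del (m := [:: (x, b); (x, ~~ b)])) => //; left; exists x, b.
  by apply: (Der_ins (m := [:: (x, b); (x, ~~ b)])) => //; left; exists x, b.
- by split => h; [apply: (Der_del (m := r)) | apply: (Der_ins (m := r))]; rewrite //; right.
Qed.

Lemma Der_tr l u v : Der l u -> peq u v -> Der l v.
Proof. by move=> h e; apply/(Der_peq _ e). Qed.

Lemma Der_nil l v : peq [::] v -> Der l v.
Proof. by apply: Der_tr; apply: Der_one. Qed.

Lemma Der_complete l w : Tor l w -> Der l w.
Proof.
elim: l w => [|l IH] w /= hw.
  by apply: Der_nil; apply: pe_sym.
pose N g := (forall u c, Der l.+1 u -> Der l.+1 (u ++ winv c ++ g ++ c)) /\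
            (forall u c, Der l.+1 u -> Der l.+1 (u ++ winv c ++ winv g ++ c)).
have key : forall u c g, Der l.+1 u -> peq (u ++ winv c ++ g ++ c) (u ++ winv c ++ g ++ c) by move=> *; apply: pe_refl.
have hN : normal_subgroup peq cat winv [::] N.
  split.
  - move=> g h e [Ng1 Ng2]; split => u c hu.
      apply: (Der_tr (Ng1 u c hu)).
      apply: peq_cat; first exact: pe_refl.
      apply: peq_cat; first exact: pe_refl.
      by apply: peq_cat; [exact: e | exact: pe_refl].
    apply: (Der_tr (Ng2 u c hu)).
    apply: peq_cat; first exact: pe_refl.
    apply: peq_cat; first exact: pe_refl.
    by apply: peq_cat; [exact: peq_winv | exact: pe_refl].
  - split => u c hu; rewrite ?winv_nil /=; apply: (Der_tr hu).
      by have := peq_cat (pe_refl fR u) (pe_sym (peq_invl c)); rewrite cats0.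
    by have := peq_cat (pe_refl fR u) (pe_sym (peq_invl c)); rewrite cats0.
  - move=> g h [Ng1 Ng2] [Nh1 Nh2]; split => u c hu.
      apply: (Der_tr (Nh1 _ c (Ng1 u c hu))).
      rewrite -!catA; apply: peq_cat; first exact: pe_refl.
      apply: peq_cat; first exact: pe_refl.
      apply: peq_cat; first exact: pe_refl.
      rewrite catA; have := peq_cat (peq_invr c) (pe_refl fR (h ++ c)); by [].
    apply: (Der_tr (Ng2 _ c (Nh2 u c hu))).
    rewrite winv_cat -!catA; apply: peq_cat; first exact: pe_refl.
    apply: peq_cat; first exact: pe_refl.
    apply: peq_cat; first exact: pe_refl.
    rewrite catA; have := peq_cat (peq_invr c) (pe_refl fR (winv g ++ c)); by [].
  - by move=> g [Ng1 Ng2]; split; rewrite ?winvK.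
  - move=> g h [Ng1 Ng2]; split => u c hu.
      have := Ng1 u (h ++ c) hu; by rewrite winv_cat -!catA.
    have := Ng2 u (h ++ c) hu; by rewrite !winv_cat winvK -!catA.
have hS : forall g, (exists a, A a /\ Tor l (gpow cat winv [::] g a)) -> N g.
  move=> g [a [hA /Tor_gpow hg]]; split => u c hu.
    apply: Der_conj hu (IH _ hg) hA _.
    by apply: Der_nil; apply: pe_sym; apply: peq_invl.
  apply: Der_conj hu _ hA _.
    by rewrite wpow_winv; apply: IH; apply: Tor_inv.
  by apply: Der_nil; apply: pe_sym; apply: peq_invl.
have := (hw N hN hS).1 [::] [::] (Der_one _).
by rewrite /= cats0.
Qed.

End Group.

Lemma pickle_inj (T : countType) : injective (@pickle T).
Proof. exact: pcan_inj pickleK. Qed.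

Lemma nandE a b : (nand a b != 0) = (a != 0) && (b != 0). Proof. by rewrite /nand nbE. Qed.
Lemma norE a b : (nor a b != 0) = (a != 0) || (b != 0). Proof. by rewrite /nor nbE. Qed.
Lemma neqE a b : (neq a b != 0) = (a == b). Proof. by rewrite /neq nbE. Qed.
Lemma nleE a b : (nle a b != 0) = (a <= b). Proof. by rewrite /nle nbE. Qed.
Lemma sgnE a : (sgn a != 0) = (0 < a). Proof. by rewrite /sgn nbE. Qed.
Lemma nnotE a : (nnot a != 0) = (a == 0). Proof. by rewrite /nnot nbE. Qed.

Lemma bsum_eq0 b F : bsum b F = 0 <-> (forall j, j < b -> F j = 0).
Proof.
elim: b => [|b IH]; first by split => // _ j.
rewrite bsum_S; split.
  move/eqP; rewrite addn_eq0 => /andP [/eqP h1 /eqP h2] j; rewrite ltnS leq_eqVlt.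
  by case/orP => [/eqP -> //|hj]; apply: (proj1 IH h1).
move=> h; rewrite (proj2 IH) ?h // => j hj; apply: h; exact: ltnW.
Qed.

Lemma bex_spec b F : bex b F != 0 <-> exists j, j < b /\ F j != 0.
Proof.
rewrite /bex sgnE; elim: b => [|b IH]; first by split => // -[j []].
rewrite bsum_S addn_gt0; split.
  case/orP => [/IH [j [hj hF]]|hF]; first by exists j; split => //; apply: ltnW.
  by exists b; split; rewrite // -lt0n.
case=> j [hj hF]; move: hj; rewrite ltnS leq_eqVlt => /orP [/eqP e|hj].
  by rewrite -e !lt0n hF orbT.
by apply/orP; left; apply/IH; exists j.
Qed.

Lemma ball_spec b F : ball b F != 0 <-> forall j, j < b -> F j != 0.
Proof.
rewrite /ball nnotE; split.
  by move/eqP/bsum_eq0 => h j hj; move: (h j hj); rewrite /nnot /nb; case: (F j).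
by move=> h; apply/eqP/bsum_eq0 => j hj; move: (h j hj); rewrite /nnot /nb; case: (F j).
Qed.

Lemma pickle_Posz m : pickle (Posz m) = code2 (2 ^ m) 0.
Proof.
change (pickle (Posz m)) with (code [:: code [:: m]; code [::]]).
by rewrite code2E codeS /= muln1.
Qed.

Lemma pickle_Negz m : pickle (Negz m) = code2 0 (2 ^ m).
Proof.
change (pickle (Negz m)) with (code [:: code [::]; code [:: m]]).
have e1 : code [:: m] = 2 ^ m by rewrite codeS /= muln1.
by rewrite code2E e1.
Qed.

Lemma pair_code x b : b <= 1 ->
  code2 (code2 x b) (code2 x (1 - b)) = pickle [:: (x, b == 1); (x, ~~ (b == 1))].
Proof. by case: b => [|[|b]] // _; rewrite pickleE /= !code2E. Qed.

Definition sint (sg mm : nat) : int := if sg != 0 then Negz mm else Posz mm.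

Lemma sint_pickle sg mm :
  pickle (sint sg mm) = nif sg (code2 0 (2 ^ mm)) (code2 (2 ^ mm) 0).
Proof. by rewrite /sint /nif; case: (sg != 0); rewrite ?pickle_Posz ?pickle_Negz. Qed.

Lemma sint_absn sg mm : absn (sint sg mm) = nif sg mm.+1 mm.
Proof. by rewrite /sint /nif; case: (sg != 0). Qed.

Section Sound.
Variables (fX fR : nat -> nat) (fA : nat -> nat -> nat) (A : int -> Prop).
Hypothesis hfA : forall z, A z <-> exists k, fA k (pickle z) != 0.

Lemma check_sound hs e :
  (forall l u, hs l u != 0 -> exists w, u = pickle w /\ Der fR A l w) ->
  check fR fA hs e != 0 -> exists w, nthc e 2 = pickle w /\ Der fR A (nthc e 1) w.
Proof.
move=> IHs; rewrite /check !norE !nandE !neqE.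
case/orP => [/andP [_ /eqP ->]| /orP [/andP [_ H] | /andP [_ H]]].
- by exists [::]; split => //; exact: Der_one.
- move: H => /and3P [hok hu heqs].
  have [m [hm elm]] : exists m, nif (nthc e 7) (predn (fR (nthc e 10)))
        (code2 (code2 (nthc e 8) (nthc e 9)) (code2 (nthc e 8) (1 - nthc e 9))) = pickle m
        /\ elem fR m.
    move: hok; rewrite /nif; case: ifP => _.
      rewrite nandE sgnE => /andP [hpos /IHs [w0 [hw0 _]]].
      have [m' [m [_ _ hm]]] := catc_split hw0.
      exists m; split => //; right; exists (nthc e 10); by rewrite -hm prednK.
    rewrite nleE => hb; exists [:: (nthc e 8, nthc e 9 == 1); (nthc e 8, ~~ (nthc e 9 == 1))].
    split; first by rewrite pair_code.
    by left; do 2 eexists; reflexivity.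
  have [wu [hu' Du]] := IHs _ _ hu.
  rewrite hm in heqs; move: heqs; rewrite /nif; case: ifP => _; rewrite nandE !neqE.
    move=> /andP [/eqP h1 /eqP h2]; rewrite hu' in h1.
    have [w1 [w2 [e1 e2 e3]]] := catc_split (esym h1).
    exists (w1 ++ m ++ w2); split; first by rewrite h2 e2 e3 !catc_pickle.
    by apply: Der_ins => //; rewrite -e1.
  move=> /andP [/eqP h1 /eqP h2]; rewrite hu' in h1.
  have [w1 [w' [e1 e2 e3]]] := catc_split (esym h1).
  have [m1 [w2 [e4 e5 e6]]] := catc_split e3.
  have em : m1 = m by apply: pickle_inj.
  exists (w1 ++ w2); split; first by rewrite h2 e2 e6 catc_pickle.
  apply: (Der_del (m := m)) => //; by rewrite -em -e4 -e1.
- move: H =>  /andP [hl /andP [hu /andP [hp /andP [hA /andP [hc /andP [hss /eqP hv]]]]]].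
  have [wu [hu' Du]] := IHs _ _ hu.
  have [w3 [hw3 _]] := IHs _ _ hss.
  have [ws'' [ws [_ _ hws]]] := catc_split hw3.
  have [wp [hwp Dp]] := IHs _ _ hp.
  rewrite hws powc_pickle -sint_absn in hwp; move/pickle_inj: hwp => hwp.
  have [w0 [hw0 D0]] := IHs _ _ hc.
  have [wc' [wc [e1 e2 e3]]] := catc_split hw0.
  have hAa : A (sint (nthc e 5) (nthc e 6)).
    apply/hfA; exists (nthc e 7); rewrite sint_pickle; move: hA; by case: (fA _ _).
  exists (wu ++ wc' ++ ws ++ wc); split.
    by rewrite hv hu' e2 e3 hws !catc_pickle.
  move: hl Du Dp; case: (nthc e 1) => // l _ Du Dp.
  by apply: Der_conj Du _ hAa _; rewrite ?hwp // -e1.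
Qed.

Lemma hasin_spec dc j l u : hasin dc j l u != 0 <->
  exists j', j' < j /\ nthc (nthc dc j') 1 = l /\ nthc (nthc dc j') 2 = u.
Proof.
rewrite /hasin bex_spec; split.
  by case=> j' [hj]; rewrite nandE !neqE => /andP [/eqP h1 /eqP h2]; exists j'.
by case=> j' [hj [h1 h2]]; exists j'; rewrite nandE !neqE h1 h2 !eqxx.
Qed.

Lemma valid_sound dc : valid fR fA dc != 0 ->
  forall j, j < lenc dc -> exists w, nthc (nthc dc j) 2 = pickle w /\ Der fR A (nthc (nthc dc j) 1) w.
Proof.
move/ball_spec => hv j; elim/ltn_ind: j => j IH hj.
apply: (check_sound (hs := hasin dc j)); last exact: hv.
move=> l u /hasin_spec [j' [hj' [<- <-]]]; apply: IH => //.
exact: ltn_trans hj' hj.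
Qed.

End Sound.

Lemma nand_mono a b a' b' : (a != 0 -> a' != 0) -> (b != 0 -> b' != 0) -> nand a b != 0 -> nand a' b' != 0.
Proof. by move=> h1 h2; rewrite !nandE => /andP [/h1 -> /h2 ->]. Qed.
Lemma nor_mono a b a' b' : (a != 0 -> a' != 0) -> (b != 0 -> b' != 0) -> nor a b != 0 -> nor a' b' != 0.
Proof. by move=> h1 h2; rewrite !norE => /orP [/h1 -> | /h2 ->] //; rewrite orbT. Qed.
Lemma nif_mono c a b a' b' : (a != 0 -> a' != 0) -> (b != 0 -> b' != 0) -> nif c a b != 0 -> nif c a' b' != 0.
Proof. by move=> h1 h2; rewrite /nif; case: ifP. Qed.

Ltac mono H :=
  lazymatch goal with
  | |- is_true (nand _ _ != 0) -> is_true (nand _ _ != 0) => apply: nand_mono; [mono H | mono H]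
  | |- is_true (nor _ _ != 0) -> is_true (nor _ _ != 0) => apply: nor_mono; [mono H | mono H]
  | |- is_true (nif _ _ _ != 0) -> is_true (nif _ _ _ != 0) => apply: nif_mono; [mono H | mono H]
  | |- ?x -> ?x => exact (fun h => h)
  | |- _ => exact: H
  end.

Section Complete.
Variables (fX fR : nat -> nat) (fA : nat -> nat -> nat) (A : int -> Prop).
Hypothesis hfA : forall z, A z <-> exists k, fA k (pickle z) != 0.

Lemma check_mono (hs hs' : nat -> nat -> nat) e : (forall l u, hs l u != 0 -> hs' l u != 0) ->
  check fR fA hs e != 0 -> check fR fA hs' e != 0.
Proof.
move=> H; rewrite /check /check1 /check2.
mono H.
Qed.

Definition hasL (P : seq nat) l u := has (fun e => (nthc e 1 == l) && (nthc e 2 == u)) P.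
Definition hsL P l u : nat := nb (hasL P l u).

Definition validL D := forall j, j < size D -> check fR fA (hsL (take j D)) (nth 0 D j) != 0.

Lemma validL_app D1 D2 : validL D1 ->
  (forall j, j < size D2 -> check fR fA (hsL (D1 ++ take j D2)) (nth 0 D2 j) != 0) ->
  validL (D1 ++ D2).
Proof.
move=> h1 h2 j; rewrite size_cat => hj.
case: (ltnP j (size D1)) => hj1.
  by rewrite take_cat hj1 nth_cat hj1; apply: h1.
rewrite take_cat ltnNge hj1 /= nth_cat ltnNge hj1 /=.
by apply: h2; rewrite -(ltn_add2l (size D1)) subnKC.
Qed.

Lemma hasL_cat P1 P2 l u : hasL (P1 ++ P2) l u = hasL P1 l u || hasL P2 l u.
Proof. by rewrite /hasL has_cat. Qed.

Lemma validL_cat D1 D2 : validL D1 -> validL D2 -> validL (D1 ++ D2).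
Proof.
move=> h1 h2; apply: validL_app => // j hj; apply: check_mono (h2 j hj).
by move=> l u; rewrite /hsL !nbE hasL_cat => ->; rewrite orbT.
Qed.

Lemma validL_rcons D e : validL D -> check fR fA (hsL D) e != 0 -> validL (rcons D e).
Proof.
move=> h1 h2; rewrite -cats1; apply: validL_app => // -[|j] //= _.
by rewrite cats0.
Qed.

Lemma check_one l : check fR fA (hsL [::]) (code [:: 0; l; 0]) != 0.
Proof. by rewrite /check !nthc_code; cbn [nth]; rewrite norE nandE !neqE. Qed.

Lemma hasL_one D l u e : nthc e 1 = l -> nthc e 2 = u -> hasL (rcons D e) l u.
Proof. by move=> h1 h2; rewrite /hasL -cats1 has_cat /= h1 h2 !eqxx orbT. Qed.

Lemma check_step hs l (p q m : word) (dir : bool) (kind x b k m' : nat) :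
  nif kind (predn (fR k)) (code2 (code2 x b) (code2 x (1 - b))) = pickle m ->
  nif kind (nand (sgn (fR k)) (hs 0 (catc m' (predn (fR k))))) (nle b 1) != 0 ->
  hs l (pickle (if dir then p ++ q else p ++ m ++ q)) != 0 ->
  check fR fA hs (code [:: 1; l; pickle (if dir then p ++ m ++ q else p ++ q);
     pickle (if dir then p ++ q else p ++ m ++ q); pickle p; pickle q; nb dir; kind; x; b; k; m'])
  != 0.
Proof.
move=> hm hok hu.
rewrite /check !nthc_code; cbn [nth].
rewrite norE; apply/orP; right; rewrite norE; apply/orP; left; rewrite nandE; apply/andP; split; first by [].
rewrite /check1 !nthc_code; cbn [nth]; rewrite !nandE hok hu hm /=.
case: dir {hu} => /=; rewrite /nif /=.
all: by rewrite nandE !neqE !catc_pickle !eqxx.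
Qed.


Lemma check_conj hs l (u s c' c : word) sg mm kA :
  hs l.+1 (pickle u) != 0 ->
  hs l (pickle (wpow s (absn (sint sg mm)))) != 0 ->
  fA kA (pickle (sint sg mm)) != 0 ->
  hs 0 (pickle (c' ++ c)) != 0 ->
  hs 0 (pickle (winv s ++ s)) != 0 ->
  check fR fA hs (code [:: 2; l.+1; pickle (u ++ c' ++ s ++ c); pickle u; pickle s; sg; mm; kA;
                          pickle c'; pickle c; pickle (winv s)]) != 0.
Proof.
move=> h1 h2 h3 h4 h5.
rewrite /check !nthc_code; cbn [nth].
rewrite norE; apply/orP; right; rewrite norE; apply/orP; right; rewrite nandE; apply/andP; split; first by [].
rewrite /check2 !nthc_code; cbn [nth].
rewrite -sint_absn -sint_pickle powc_pickle !catc_pickle -[predn l.+1]/l.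
by rewrite !nandE !sgnE !lt0n h1 h2 h3 h4 h5 !neqE eqxx.
Qed.

Lemma hsLE D l u : (hsL D l u != 0) = hasL D l u.
Proof. by rewrite /hsL nbE. Qed.

Lemma validL_nil : validL [::]. Proof. by []. Qed.

Lemma hasL_catl D1 D2 l u : hasL D1 l u -> hasL (D1 ++ D2) l u.
Proof. by rewrite hasL_cat => ->. Qed.
Lemma hasL_catr D1 D2 l u : hasL D2 l u -> hasL (D1 ++ D2) l u.
Proof. by rewrite hasL_cat => ->; rewrite orbT. Qed.

Lemma D_one l : exists D, validL D /\ hasL D l (pickle (Nil letter)).
Proof.
exists (rcons [::] (code [:: 0; l; 0])); split.
  apply: validL_rcons validL_nil _; exact: check_one.
by apply: hasL_one; rewrite nthc_code.
Qed.

Lemma D_free l (p q : word) x (b dir : bool) D : validL D ->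
  hasL D l (pickle (if dir then p ++ q else p ++ [:: (x, b); (x, ~~ b)] ++ q)) ->
  exists D', validL D' /\ hasL D' l (pickle (if dir then p ++ [:: (x, b); (x, ~~ b)] ++ q else p ++ q)).
Proof.
move=> hD hh.
exists (rcons D (code [:: 1; l; pickle (if dir then p ++ [:: (x, b); (x, ~~ b)] ++ q else p ++ q);
     pickle (if dir then p ++ q else p ++ [:: (x, b); (x, ~~ b)] ++ q); pickle p; pickle q; nb dir; 0; x; nb b; 0; 0])).
split; last by apply: hasL_one; rewrite nthc_code.
apply: validL_rcons => //; apply: check_step; last by rewrite hsLE.
  by rewrite /nif /= pair_code; case: b {hh}.
by rewrite /nif /= nleE; case: b {hh}.
Qed.

Lemma free_inv_D (w : word) : exists D, validL D /\ hasL D 0 (pickle (winv w ++ w)).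
Proof.
elim: w => [|[x b] w [D [hD hh]]]; first exact: D_one.
have := @D_free 0 (winv w) w x (~~ b) true D hD hh.
by rewrite winv_cons negbK -catA.
Qed.

Lemma D_rel l (p q m : word) (dir : bool) D : validL D -> rels fR m ->
  hasL D l (pickle (if dir then p ++ q else p ++ m ++ q)) ->
  exists D', validL D' /\ hasL D' l (pickle (if dir then p ++ m ++ q else p ++ q)).
Proof.
move=> hD [k hk] hh; have [D2 [hD2 hh2]] := free_inv_D m.
exists (rcons (D ++ D2) (code [:: 1; l; pickle (if dir then p ++ m ++ q else p ++ q);
     pickle (if dir then p ++ q else p ++ m ++ q); pickle p; pickle q; nb dir; 1; 0; 0; k; pickle (winv m)])).
split; last by apply: hasL_one; rewrite nthc_code.
apply: validL_rcons; first exact: validL_cat.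
apply: check_step; first by rewrite /nif /= hk.
  by rewrite /nif /= hk nandE sgnE /= hsLE catc_pickle; apply: hasL_catr.
by rewrite hsLE; apply: hasL_catl.
Qed.

Lemma sint_surj (a : int) : exists sg mm, a = sint sg mm.
Proof. by case: a => m; [exists 0, m | exists 1, m]. Qed.

Lemma Der_D l w : Der fR A l w -> exists D, validL D /\ hasL D l (pickle w).
Proof.
elim=> {l w} [l|l p q m _ [D [hD hh]] hm|l p q m _ [D [hD hh]] hm|l u s a c' c _ [D1 [hD1 hh1]] _ [D2 [hD2 hh2]] hA _ [D3 [hD3 hh3]]].
- exact: D_one.
- case: hm => [[x [b em]]|hr]; last exact: (@D_rel l p q m false D hD hr hh).
  by subst m; apply: (@D_free l p q x b false D hD hh).
- case: hm => [[x [b em]]|hr]; last exact: (@D_rel l p q m true D hD hr hh).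
  by subst m; apply: (@D_free l p q x b true D hD hh).
- have [D4 [hD4 hh4]] := free_inv_D s.
  have [sg [mm ea]] := sint_surj a; subst a.
  have [kA hkA] := proj1 (hfA _) hA.
  exists (rcons (D1 ++ D2 ++ D3 ++ D4) (code [:: 2; l.+1; pickle (u ++ c' ++ s ++ c); pickle u; pickle s; sg; mm; kA;
                          pickle c'; pickle c; pickle (winv s)])).
  split; last by apply: hasL_one; rewrite nthc_code.
  apply: validL_rcons; first by do 3 apply: validL_cat => //.
  apply: check_conj => //; rewrite hsLE.
  + exact: hasL_catl.
  + by apply: hasL_catr; apply: hasL_catl.
  + by apply: hasL_catr; apply: hasL_catr; apply: hasL_catl.
  + by apply: hasL_catr; apply: hasL_catr; apply: hasL_catr.
Qed.

End Complete.

Section Final.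
Variables (fX fR : nat -> nat) (fA : nat -> nat -> nat) (A : int -> Prop).
Hypothesis hfA : forall z, A z <-> exists k, fA k (pickle z) != 0.

Lemma hasL_hasin D j l u : hasL (take j D) l u -> hasin (code D) j l u != 0.
Proof.
case/(has_nthP 0) => i hi /andP [/eqP h1 /eqP h2].
have hij : i < j by apply: leq_trans hi _; rewrite size_take; case: ifP => // /negbT; rewrite -leqNgt.
apply/hasin_spec; exists i; split => //.
by rewrite nthc_code -(nth_take 0 hij).
Qed.

Lemma valid_code D : validL fR fA D -> valid fR fA (code D) != 0.
Proof.
move=> hD; apply/ball_spec => j; rewrite lenc_code => hj; rewrite nthc_code.
apply: check_mono (hD j hj) => l u; rewrite hsLE; exact: hasL_hasin.
Qed.

Lemma hasin_full D l u : hasL D l u -> hasin (code D) (lenc (code D)) l u != 0.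
Proof. by rewrite lenc_code -{1}(take_size D); apply: hasL_hasin. Qed.

Lemma wover_iff ec (w : word) : wover fX ec (pickle w) != 0 <->
  forall m, m < size w -> fX (nthc ec m) = (nth (0, false) w m).1.+1.
Proof.
rewrite /wover pickleE lenc_code size_map; split.
  move/ball_spec => h m hm; move: (h m hm); rewrite nthc_code (nth_map (0, false)) //.
  by rewrite /pl nthc_code /= neqE => /eqP.
move=> h; apply/ball_spec => m hm.
by rewrite nthc_code (nth_map (0, false)) // /pl nthc_code /= neqE h.
Qed.

Lemma word_over_iff (w : word) : word_over fX w <-> exists ec, wover fX ec (pickle w) != 0.
Proof.
split.
  move=> hw; suff [ks hks] : exists ks : seq nat,
      forall m, m < size w -> fX (nth 0 ks m) = (nth (0, false) w m).1.+1.
    by exists (code ks); apply/wover_iff => m hm; rewrite nthc_code hks.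
  elim: w hw => [|l w IH] hw; first by exists [::].
  have [k hk] := hw l (mem_head _ _).
  have [ks hks] : exists ks : seq nat, forall m, m < size w -> fX (nth 0 ks m) = (nth (0, false) w m).1.+1.
    by apply: IH => l' hl'; apply: hw; rewrite in_cons hl' orbT.
  by exists (k :: ks) => -[|m] //= hm; apply: hks.
case=> ec /wover_iff h l hl.
exists (nthc ec (index l w)); rewrite h ?index_mem // nth_index //.
Qed.

Lemma main_iff i (w : word) : (word_over fX w /\ Der fR A i w) <->
  exists dc ec, Core fX fR fA dc ec i (pickle w) != 0.
Proof.
split.
  case=> /word_over_iff [ec hec] /(Der_D hfA) [D [hD hh]].
  exists (code D), ec; rewrite /Core !nandE hec valid_code //.
  by rewrite hasin_full.
case=> dc [ec]; rewrite /Core !nandE => /and3P [hv /hasin_spec [j [hj [h1 h2]]] hw].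
split; first by apply/word_over_iff; exists ec.
have [w' [hw' Dw']] := valid_sound hfA hv hj.
by rewrite h1 in Dw'; rewrite h2 in hw'; rewrite (pickle_inj hw').
Qed.

End Final.

Theorem lemma2p7 (A : int -> Prop) (hA : re_int_set A) :
  (exists t : pr, forall (fX fR : nat -> nat),
      computable_fun fX -> computable_fun fR -> wf_presentation fX fR ->
      forall (i : nat) (w : word),
        TA fX fR A i w <-> exists k, pr_eval [:: fX; fR] t [:: k; i; pickle w] != 0)
  /\
  (forall (fX fR : nat -> nat),
      computable_fun fX -> computable_fun fR -> wf_presentation fX fR ->
      (exists t : pr, forall w : word,
          (exists i, TA fX fR A i w) <-> exists k, pr_eval [::] t [:: k; pickle w] != 0)
      /\
      (forall w : word, (exists i, TA fX fR A i w) <-> TAomega_set fX fR A w)).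
Proof.
case: hA => tA htA.
pose fA k z := pr_eval [::] tA [:: k; z].
have hfA : forall z, A z <-> exists k, fA k (pickle z) != 0 by [].
have HA : PR2 [::] fA.
  by exists tA => -[|x [|y [|z xs]]] //.
have TA_iff : forall fX fR i w, TA fX fR A i w <->
    exists dc ec, Core fX fR fA dc ec i (pickle w) != 0.
  move=> fX fR i w; rewrite -(@main_iff fX fR fA A hfA i w) /TA; split; case=> h1 h2; split => //.
    exact: Der_complete.
  exact: Der_sound.
split.
  have [t ht] := uprf_Core1 HA.
  exists t => fX fR _ _ _ i w; rewrite TA_iff; split.
    case=> dc [ec hc]; exists (code [:: dc; ec]).
    by rewrite ht // !nthc_code.
  by case=> k; rewrite ht //; exists (nthc k 0), (nthc k 1).
move=> fX fR [tX hX] [tR hR] _; split.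
  have [t ht] := uprf_Core2 HA.
  exists (osubst tX tR t) => w; split.
    case=> i /TA_iff [dc [ec hc]]; exists (code [:: dc; ec; i]).
    by rewrite (osubst_eval hX hR) ht // !nthc_code.
  case=> k; rewrite (osubst_eval hX hR) ht // => hc.
  by exists (nthc k 2); apply/TA_iff; exists (nthc k 0), (nthc k 1).
move=> w; split.
  by case=> i [h1 h2]; split => //; exists i.
by case=> h1 [i h2]; exists i.
Qed.
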